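(* Let $G$ be a finite soluble group and $N$ a minimal normal subgroup of $G$. If $t\in G$ is an involution, then $\mathrm d(t,N)\le 1$ in $\Gamma(G)$. Moreover, if $x\in G\setminus\{1\}$ satisfies $\mathrm d(x,N)>3$ and $y\in\langle x\rangle$ has prime order, then both $C_G(y)$ and $x$ have odd order.
   Context: For a group $G$, the normalising graph $\Gamma(G)$ has vertex set $G\setminus\{1\}$, and two distinct vertices $x,y$ are adjacent if and only if $\langle x\rangle$ normalises $\langle y\rangle$ or $\langle y\rangle$ normalises $\langle x\rangle$. $\mathrm d$ is graph distance (infinite if there is no path), and $\mathrm d(x,N)=\min\{\mathrm d(x,n):n\in N\setminus\{1\}\}$, which is $0$ if $x\in N$. *)

(* Defs.v *)
From mathcomp Require Import all_boot all_fingroup all_solvable.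
Set Implicit Arguments. Unset Strict Implicit. Unset Printing Implicit Defensive.
Local Open Scope group_scope.

(* Normalising graph Gamma(G): vertex set G \ {1}; distinct x, y adjacent iff
   <x> normalises <y> or <y> normalises <x>. *)
Definition norm_adj (gT : finGroupType) (G : {set gT}) : rel gT :=
  fun x y => [&& x \in G^#, y \in G^#, x != y &
     (<[x]> \subset 'N(<[y]>)) || (<[y]> \subset 'N(<[x]>))].

(* d(x,y) <= k in Gamma(G): there is a walk of length at most k from x to y
   (x, y vertices of Gamma(G)). Length-0 walk: x = y. *)
Definition dist_le (gT : finGroupType) (G : {set gT}) (x y : gT) (k : nat) : Prop :=
  x \in G^# /\ exists p : seq gT,
    [/\ path (norm_adj G) x p, last x p = y & (size p <= k)%N].

(* d(x,N) <= k, where d(x,N) = min { d(x,n) : n in N \ {1} }. *)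
Definition distN_le (gT : finGroupType) (G N : {set gT}) (x : gT) (k : nat) : Prop :=
  exists2 n, n \in N^# & dist_le G x n k.

(* Main.v *)
Require Import Defs.
From mathcomp Require Import all_boot all_fingroup all_solvable.
Local Open Scope group_scope.

Lemma dist_trans (gT : finGroupType) (G : {set gT}) x y z a b :
  dist_le G x y a -> dist_le G y z b -> dist_le G x z (a + b).
Proof.
move=> [Hx [p [Pp Lp Sp]]] [Hy [q [Pq Lq Sq]]]; split=> //.
exists (p ++ q); rewrite cat_path last_cat Lp Pp Pq Lq size_cat; split=> //.
exact: leq_add.
Qed.

Lemma dist_adj (gT : finGroupType) (G : {set gT}) x y :
  x \in G^# -> y \in G^# ->
  (<[x]> \subset 'N(<[y]>)) || (<[y]> \subset 'N(<[x]>)) -> dist_le G x y 1.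
Proof.
move=> Hx Hy Ha; split=> //.
have [->|nxy] := eqVneq x y; first by exists [::].
exists [:: y]; split=> //=; rewrite andbT /norm_adj Hx Hy nxy //.
Qed.

Lemma comm_norm (gT : finGroupType) (a b : gT) :
  commute a b -> <[a]> \subset 'N(<[b]>).
Proof.
move=> c; rewrite cycle_subG; apply: (subsetP (cent_sub _)).
by rewrite cent_cycle; apply/cent1P.
Qed.

Lemma part1 (gT : finGroupType) (G N : {group gT}) :
  N \subset G -> minnormal N G ->
  forall t : gT, t \in G -> #[t] = 2 -> distN_le G N t 1.
Proof.
move=> sNG mN t tG ot.
have /andP[ntN nNG] := mingroupp mN.
have t1 : t != 1 by apply/eqP=> e; move: ot; rewrite e order1.
have tG' : t \in G^# by rewrite !inE t1.
have tt : t * t = 1 by rewrite -(expg_order t) ot expgS expg1.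
have [tN|tN] := boolP (t \in N).
  exists t; first by rewrite !inE t1.
  by split=> //; exists [::].
have [n nN n1] := trivgPn _ ntN.
have tNN : t \in 'N(N) := subsetP nNG t tG.
have inG u : u \in N^# -> u \in G^#.
  by rewrite !inE => /andP[-> /(subsetP sNG) ->].
set m := n^-1 * n ^ t.
have mNN : m \in N by rewrite groupM ?groupV ?memJ_norm.
have [m1|m1] := eqVneq m 1.
  have nt : n ^ t = n by rewrite -(mulKVg n (n ^ t)) -/m m1 mulg1.
  have nn : n \in N^# by rewrite !inE n1.
  exists n => //; apply: dist_adj => //; first exact: inG.
  by rewrite comm_norm // /commute [RHS]conjgC nt.
have mm : m \in N^# by rewrite !inE m1 mNN.
exists m => //; apply: dist_adj => //; first exact: inG.
apply/orP; left; rewrite cycle_subG; apply/normP.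
rewrite -cycleJ.
have -> : m ^ t = m^-1.
  rewrite /m conjMg conjVg invMg invgK.
  rewrite -(conjgM n t t) tt conjg1.
  by rewrite !invMg !invgK.
by rewrite cycleV.
Qed.

Theorem mainTheorem7 (gT : finGroupType) (G N : {group gT}) :
  solvable G -> N \subset G -> minnormal N G ->
  (forall t : gT, t \in G -> #[t] = 2 -> distN_le G N t 1) /\
  (forall x y : gT, x \in G^# -> ~ distN_le G N x 3 ->
     y \in <[x]> -> prime #[y] -> odd #|'C_G[y]| /\ odd #[x]).
Proof.
move=> _ sNG mN; have P1 := @part1 gT G N sNG mN; split=> // x y xG nd yx py.
have xG1 : x \in G by move: xG; rewrite !inE => /andP[].
have yG : y \in G by apply: (subsetP _ _ yx); rewrite cycle_subG.
have cxy : commute x y.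
  by case/cycleP: yx => k ->; apply: commuteX.
have xC : x \in 'C_G[y] by rewrite inE xG1; apply/cent1P.
suff oC : odd #|'C_G[y]| by split=> //; exact: dvdn_odd (order_dvdG xC) oC.
apply/negP => /negP; rewrite -dvdn2 => /(Cauchy (isT : prime 2)) [t tC ot].
move: tC; rewrite inE => /andP[tG /cent1P cty].
have y1 : y != 1 by apply/eqP=> e; move: py; rewrite e order1.
have t1 : t != 1 by apply/eqP=> e; move: ot; rewrite e order1.
have yG' : y \in G^# by rewrite !inE y1.
have tG' : t \in G^# by rewrite !inE t1.
have [n nN dn] := P1 t tG ot.
apply: nd; exists n => //.
apply: (@dist_trans _ _ x y n 1 2 (@dist_adj _ _ x y xG yG' _) (@dist_trans _ _ y t n 1 1 (@dist_adj _ _ y t yG' tG' _) dn)).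
  by rewrite comm_norm.
by rewrite comm_norm //; exact/esym.
Qed.
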